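(* Define rational functions of $t$ by $K_{r+1}=1-ty_{2r+1}$ and, for $k=r,r-1,\dots,2$, $K_k=1-ty_{2k-1}-\dfrac{ty_{2k}}{K_{k+1}}$. Then, as formal power series in $t$, $$\sum_{n\ge0}R_{1,n}t^n=\cfrac{R_{1,0}}{1-\cfrac{ty_1}{1-\cfrac{ty_2}{K_2}}},$$ where $y_{2\alpha-1}=\frac{R_{\alpha-1,0}R_{\alpha,1}}{R_{\alpha,0}R_{\alpha-1,1}}$ ($1\le\alpha\le r+1$) and $y_{2\alpha}=\frac{R_{\alpha-1,0}R_{\alpha+1,1}}{R_{\alpha,0}R_{\alpha,1}}$ ($1\le\alpha\le r$). (For $r=1$, $K_2=1-ty_3$.)
   Context: Fix $r\ge1$, $I_r=\{1,\dots,r\}$. Let $R_{1,0},\dots,R_{r,0},R_{1,1},\dots,R_{r,1}$ be algebraically independent indeterminates over $\mathbb Q$ and $(R_{\alpha,n})_{0\le\alpha\le r+1,n\in\mathbb Z}$ the $A_r$ $Q$-system: the unique family of nonzero elements of $\mathbb Q(R_{1,0},\dots,R_{r,1})$ with these initial values, $R_{0,n}=R_{r+1,n}=1$, and $R_{\alpha,n+1}R_{\alpha,n-1}=R_{\alpha,n}^2+R_{\alpha+1,n}R_{\alpha-1,n}$ ($\alpha\in I_r$, $n\in\mathbb Z$). *)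

(* Defs.v *)
From HB Require Import structures.
From mathcomp Require Import all_boot all_order all_algebra.
Set Implicit Arguments. Unset Strict Implicit. Unset Printing Implicit Defensive.
Import Order.TTheory GRing.Theory Num.Theory.
Local Open Scope ring_scope.

Definition fps (F : fieldType) := nat -> F.

Section FPS.
Variable F : fieldType.

Definition fps_const (c : F) : fps F := fun n => if n is 0%N then c else 0.
Definition fps_add (a b : fps F) : fps F := fun n => a n + b n.
Definition fps_opp (a : fps F) : fps F := fun n => - a n.
Definition fps_sub (a b : fps F) : fps F := fps_add a (fps_opp b).
Definition fps_mul (a b : fps F) : fps F :=
  fun n => \sum_(i < n.+1) a i * b (n - i)%N.
Definition fps_mulX (a : fps F) : fps F :=
  fun n => if n is n'.+1 then a n' else 0.

Fixpoint fps_inv_coefs (a : fps F) (n : nat) : seq F :=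
  match n with
  | 0%N => [:: (a 0%N)^-1]
  | n'.+1 => let s := fps_inv_coefs a n' in
      rcons s (- (a 0%N)^-1 * \sum_(i < n'.+1) a (n'.+1 - i)%N * nth 0 s i)
  end.
Definition fps_inv (a : fps F) : fps F := fun n => nth 0 (fps_inv_coefs a n) n.

Definition fps_div (a b : fps F) : fps F := fps_mul a (fps_inv b).

End FPS.

Section QSys.
Variable F : fieldType.
Variable R : nat -> int -> F.

(* y_{2 alpha - 1} *)
Definition y_odd (al : nat) : F :=
  R al.-1 0 * R al 1 / (R al 0 * R al.-1 1).
(* y_{2 alpha} *)
Definition y_even (al : nat) : F :=
  R al.-1 0 * R al.+1 1 / (R al 0 * R al 1).

(* Kaux r m = K_{r+1-m} (for m <= r-1):
   K_{r+1} = 1 - t y_{2r+1},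
   K_k = 1 - t y_{2k-1} - t y_{2k} / K_{k+1}. *)
Fixpoint Kaux (r m : nat) : fps F :=
  match m with
  | 0%N => fps_sub (fps_const 1) (fps_mulX (fps_const (y_odd r.+1)))
  | m'.+1 =>
      let k := (r.+1 - m)%N in
      fps_sub (fps_sub (fps_const 1) (fps_mulX (fps_const (y_odd k))))
              (fps_mulX (fps_div (fps_const (y_even k)) (Kaux r m')))
  end.

Definition K2 (r : nat) : fps F := Kaux r r.-1.

Definition cfrac (r : nat) : fps F :=
  fps_div (fps_const (R 1 0))
    (fps_sub (fps_const 1)
       (fps_mulX (fps_div (fps_const (y_odd 1))
          (fps_sub (fps_const 1)
             (fps_mulX (fps_div (fps_const (y_even 1)) (K2 r))))))).
End QSys.

(* Main.v *)
Require Import Defs.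
From HB Require Import structures.
From mathcomp Require Import all_boot all_order all_algebra.
From Stdlib Require Import FunctionalExtensionality Ring Field Lia.
Import GRing.Theory.
Local Open Scope ring_scope.

Section Scal.
Variable F : fieldType.
Lemma Fring : @ring_theory (GRing.PzSemiRing.sort F) (0:F) (1:F) (+%R : F -> F -> F) ( *%R : F -> F -> F) (fun x y : F => x - y) (-%R : F -> F) eq.
Proof. split; intros; rewrite ?add0r ?mul1r ?mulrA ?addrA ?mulrDl ?subrr //; first [exact: addrC| exact: mulrC]. Qed.
Lemma Ffield : @field_theory (GRing.PzSemiRing.sort F) (0:F) (1:F) (+%R : F -> F -> F) ( *%R : F -> F -> F) (fun x y : F => x - y) (-%R : F -> F) (fun x y : F => x / y) (GRing.inv : F -> F) eq.
Proof. split; first exact Fring. - by apply/eqP; rewrite oner_eq0. - by []. - by move=> p /eqP Hp; rewrite mulVf. Qed.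

Add Field Ffld : Ffield.
Ltac fieldc := match goal with |- @eq _ ?a ?b => let T := type of a in change (@eq T a b) end; field.

Variables (r : nat) (R R' : nat -> int -> F).
Hypothesis h0 : forall n, R 0%N n = 1.
Hypothesis hr : forall n, R r.+1 n = 1.
Hypothesis h0' : forall n, R' 0%N n = 1.
Hypothesis hr' : forall n, R' r.+1 n = 1.
Hypothesis hnz : forall al n, (1 <= al <= r)%N -> R al n != 0.
Hypothesis hnz' : forall al n, (1 <= al <= r)%N -> R' al n != 0.
Hypothesis hsh : forall al, R' al 0 = R al 1.
Hypothesis hQ : forall al, (1 <= al <= r)%N ->
  R' al 1 * R al 0 = R al 1 ^+ 2 + R al.+1 1 * R al.-1 1.

Lemma nzR al n : (al <= r.+1)%N -> R al n <> 0.
Proof.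
case: al => [|al] h; first by rewrite h0; apply/eqP; rewrite oner_eq0.
rewrite leq_eqVlt in h; case/orP: h => [/eqP [->]|h]; first by rewrite hr; apply/eqP; rewrite oner_eq0.
by apply/eqP; apply: hnz.
Qed.
Lemma nzR' al n : (al <= r.+1)%N -> R' al n <> 0.
Proof.
case: al => [|al] h; first by rewrite h0'; apply/eqP; rewrite oner_eq0.
rewrite leq_eqVlt in h; case/orP: h => [/eqP [->]|h]; first by rewrite hr'; apply/eqP; rewrite oner_eq0.
by apply/eqP; apply: hnz'.
Qed.

Ltac nz := repeat split; (apply: nzR || apply: nzR'); apply/leP;
  (repeat match goal with H : is_true (leq _ _) |- _ => move/leP: H => H end); lia.

Lemma C2 j : (1 <= j <= r)%N ->
  y_even R j * y_odd R' j.+1 = y_even R' j * y_odd R j.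
Proof.
move=> /andP [h1 h2]; rewrite /y_even /y_odd /= !hsh.
fieldc. nz.
Qed.

Lemma hQ' al : (1 <= al <= r)%N ->
  R' al 1 = (R al 1 * R al 1 + R al.+1 1 * R al.-1 1) / R al 0.
Proof.
move=> h; by rewrite -expr2 -hQ // mulfK // hnz.
Qed.

Lemma hQnz al : (1 <= al <= r)%N -> R al 1 * R al 1 + R al.+1 1 * R al.-1 1 <> 0.
Proof.
move=> h; rewrite -expr2 -hQ //; apply/eqP; rewrite mulf_eq0 negb_or !hnz' ?hnz //.
Qed.

Lemma Ssum al : (1 <= al <= r)%N ->
  y_odd R al + y_even R al = R al.-1 0 * R' al 1 / (R al.-1 1 * R al 1).
Proof.
move=> h.
have nzp : R al 1 != 0 by apply: hnz.
have nzq : R al.-1 1 != 0.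
  by apply/eqP; apply: nzR; move/andP: h => [_ h]; apply: leq_trans (leq_pred _) _; apply: leq_trans h _.
have nza : R al 0 != 0 by apply: hnz.
rewrite (_ : y_odd R al = R al.-1 0 / R al 0 * (R al 1 / R al.-1 1)); last first.
  rewrite /y_odd; fieldc; split; apply/eqP => //.
rewrite (_ : y_even R al = R al.-1 0 / R al 0 * (R al.+1 1 / R al 1)); last first.
  rewrite /y_even; fieldc; split; apply/eqP => //.
rewrite -mulrDr addf_div // -expr2 -hQ //.
fieldc; repeat split; apply/eqP => //.
Qed.

Lemma C1 j : (1 <= j)%N -> (j < r)%N ->
  y_even R j * (y_odd R j.+1 + y_even R j.+1) = y_even R' j * (y_odd R j + y_even R j).
Proof.
move=> h1 h2.
have hj : (1 <= j <= r)%N by rewrite h1 ltnW.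
have hj1 : (1 <= j.+1 <= r)%N by rewrite h2.
rewrite (Ssum j hj) (Ssum j.+1 hj1) /y_even /= !hsh.
fieldc; nz.
Qed.

Lemma C1r : (0 < r)%N -> y_even R r * y_odd R r.+1 = y_even R' r * (y_odd R r + y_even R r).
Proof.
move=> h; have hj : (1 <= r <= r)%N by rewrite h leqnn.
rewrite (Ssum r hj) /y_even /y_odd /= !hsh !hr !hr'.
fieldc; nz.
Qed.

Lemma Ctop : (0 < r)%N -> y_odd R 1 + y_even R 1 = y_odd R' 1.
Proof.
move=> h; have hj : (1 <= 1 <= r)%N by rewrite h.
rewrite (Ssum 1 hj) /y_odd /= !hsh !h0 !h0'.
fieldc; nz.
Qed.

Lemma Cc : (0 < r)%N -> R 1 0 * y_odd R 1 = R' 1 0.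
Proof.
move=> h; rewrite /y_odd /= !hsh !h0.
fieldc; nz.
Qed.
End Scal.

Section FPSring.
Variable F : fieldType.
Local Notation S := (fps F).

Definition Pn (n : nat) (a : S) : {poly F} := \poly_(i < n.+1) a i.
Lemma coefPn n a i : (i <= n)%N -> (Pn n a)`_i = a i.
Proof. by move=> h; rewrite coef_poly ltnS h. Qed.

Lemma mulPn n i a b : (i <= n)%N -> fps_mul a b i = (Pn n a * Pn n b)`_i.
Proof.
move=> hi; rewrite coefM /fps_mul; apply: eq_bigr => j _.
have hj : (j <= n)%N by apply: leq_trans hi; rewrite -ltnS.
rewrite !coefPn //; apply: leq_trans hi; exact: leq_subr.
Qed.

Lemma coef_agree_l (p q s : {poly F}) n :
  (forall i, (i <= n)%N -> p`_i = q`_i) -> (p * s)`_n = (q * s)`_n.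
Proof.
move=> h; rewrite !coefM; apply: eq_bigr => j _; rewrite h //; by rewrite -ltnS.
Qed.

Lemma fps_mulC (a b : S) : fps_mul a b = fps_mul b a.
Proof. apply: functional_extensionality => n; by rewrite !(mulPn n) // mulrC. Qed.

Lemma fps_mulA (a b c : S) : fps_mul a (fps_mul b c) = fps_mul (fps_mul a b) c.
Proof.
apply: functional_extensionality => n.
rewrite (mulPn n) // (mulPn n n (fps_mul a b)) //.
have e1 : (Pn n (fps_mul a b) * Pn n c)`_n = (Pn n a * Pn n b * Pn n c)`_n.
  by apply: coef_agree_l => i hi; rewrite coefPn //; apply: mulPn.
have e2 : (Pn n a * Pn n (fps_mul b c))`_n = (Pn n a * (Pn n b * Pn n c))`_n.
  rewrite [in LHS]mulrC [in RHS]mulrC.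
  by apply: coef_agree_l => i hi; rewrite coefPn //; apply: mulPn.
by rewrite e1 e2 mulrA.
Qed.

Lemma fps_mulDl (a b c : S) : fps_mul (fps_add a b) c = fps_add (fps_mul a c) (fps_mul b c).
Proof.
apply: functional_extensionality => n; rewrite /fps_mul /fps_add -big_split.
by apply: eq_bigr => i _; rewrite mulrDl.
Qed.

Lemma fps_mul1 (a : S) : fps_mul (fps_const 1) a = a.
Proof.
apply: functional_extensionality => n; rewrite /fps_mul big_ord_recl /= mul1r subn0.
by rewrite big1 ?addr0 // => i _; rewrite mul0r.
Qed.

Lemma fps_ring : @ring_theory S (fps_const 0) (fps_const 1) (@fps_add F) (@fps_mul F)
   (@fps_sub F) (@fps_opp F) eq.
Proof.
split.
- by move=> x; apply: functional_extensionality => n; rewrite /fps_add; case: n => *; rewrite add0r.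
- by move=> x y; apply: functional_extensionality => n; rewrite /fps_add addrC.
- by move=> x y z; apply: functional_extensionality => n; rewrite /fps_add addrA.
- exact: fps_mul1.
- exact: fps_mulC.
- exact: fps_mulA.
- exact: fps_mulDl.
- by [].
- by move=> x; apply: functional_extensionality => n; rewrite /fps_add /fps_opp subrr; case: n.
Qed.

Add Ring fpsR : fps_ring.

Local Notation cst := (@fps_const F).
Definition Tser : fps F := fps_mulX (fps_const 1).
Local Notation T := Tser.

Lemma mul_cst_l c (x : S) : fps_mul (cst c) x = fun n => c * x n.
Proof.
apply: functional_extensionality => n; rewrite /fps_mul big_ord_recl /= subn0.
by rewrite big1 ?addr0 // => i _; rewrite mul0r.
Qed.

Lemma cst_add a b : cst (a + b) = fps_add (cst a) (cst b).
Proof. by apply: functional_extensionality => -[|n]; rewrite /fps_add /= ?addr0. Qed.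
Lemma cst_mul a b : cst (a * b) = fps_mul (cst a) (cst b).
Proof. by rewrite mul_cst_l; apply: functional_extensionality => -[|n] /=; rewrite ?mulr0. Qed.
Lemma cst_opp a : cst (- a) = fps_opp (cst a).
Proof. by apply: functional_extensionality => -[|n]; rewrite /fps_opp /= ?oppr0. Qed.
Lemma cst_sub a b : cst (a - b) = fps_sub (cst a) (cst b).
Proof. by rewrite /fps_sub -cst_opp -cst_add. Qed.

Lemma mulX_mul (a : S) : fps_mulX a = fps_mul T a.
Proof.
apply: functional_extensionality => -[|n]; rewrite /fps_mul.
  by rewrite big_ord1 /= mul0r.
rewrite big_ord_recl big_ord_recl /= mul0r add0r mul1r subSS subn0.
by rewrite big1 ?addr0 // => i _; rewrite /= mul0r.
Qed.

Lemma size_coefs (a : S) n : size (fps_inv_coefs a n) = n.+1.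
Proof. by elim: n => [|n IH] //=; rewrite size_rcons IH. Qed.

Lemma nth_coefs (a : S) n i : (i <= n)%N -> nth 0 (fps_inv_coefs a n) i = fps_inv a i.
Proof.
elim: n => [|n IH]; first by rewrite leqn0 => /eqP ->.
rewrite leq_eqVlt => /orP [/eqP -> //| hi].
by rewrite /= nth_rcons size_coefs hi IH.
Qed.

Lemma fps_invS (a : S) n : fps_inv a n.+1 =
   - (a 0%N)^-1 * \sum_(i < n.+1) a (n.+1 - i)%N * fps_inv a i.
Proof.
rewrite {1}/fps_inv /= nth_rcons size_coefs ltnn eqxx; congr (_ * _).
by apply: eq_bigr => i _; rewrite nth_coefs // -ltnS.
Qed.

Lemma inv_mul (a : S) : a 0%N = 1 -> fps_mul (fps_inv a) a = cst 1.
Proof.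
move=> a0; apply: functional_extensionality => -[|n]; rewrite /fps_mul.
  by rewrite big_ord1 /= /fps_inv /= a0 invr1 mulr1.
rewrite big_ord_recr /= subnn a0 mulr1 fps_invS a0 invr1 mulN1r.
rewrite [X in _ - X](_ : _ = \sum_(i < n.+1) fps_inv a i * a (n.+1 - i)%N) ?subrr //.
by apply: eq_bigr => i _; rewrite mulrC.
Qed.

Lemma mul_inv (a : S) : a 0%N = 1 -> fps_mul a (fps_inv a) = cst 1.
Proof. by move=> h; rewrite fps_mulC inv_mul. Qed.

Lemma cancel_r (a u v : S) : a 0%N = 1 -> fps_mul u a = fps_mul v a -> u = v.
Proof.
move=> a0 h.
have -> : u = fps_mul (fps_mul u a) (fps_inv a) by rewrite -fps_mulA mul_inv // fps_mulC fps_mul1.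
by rewrite h -fps_mulA mul_inv // fps_mulC fps_mul1.
Qed.

Lemma subr0_eq (u v : S) : fps_sub u v = cst 0 -> u = v.
Proof. move=> h; have -> : u = fps_add (fps_sub u v) v by ring. rewrite h; ring. Qed.


Local Infix "⊕" := fps_add (at level 50, left associativity).
Local Infix "⊖" := fps_sub (at level 50, left associativity).
Local Infix "⊗" := fps_mul (at level 40, left associativity).

Lemma c0_sub1T (x : S) : (cst 1 ⊖ T ⊗ x) 0%N = 1.
Proof. by rewrite -mulX_mul /fps_sub /fps_add /fps_opp /= oppr0 addr0. Qed.

Definition Aser (R : nat -> int -> F) (r m : nat) : S :=
  match m with
  | 0%N => cst (y_odd R r.+1)
  | m'.+1 => cst (y_odd R (r.+1 - m)) ⊕ fps_div (cst (y_even R (r.+1 - m))) (Kaux R r m')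
  end.

Lemma KauxE (R : nat -> int -> F) r m : Kaux R r m = cst 1 ⊖ T ⊗ Aser R r m.
Proof. by case: m => [|m]; rewrite /= !mulX_mul /fps_div; ring. Qed.

Lemma Kaux0 (R : nat -> int -> F) r m : Kaux R r m 0%N = 1.
Proof. by rewrite KauxE c0_sub1T. Qed.

Lemma AserS (R : nat -> int -> F) r m : Aser R r m.+1 =
  cst (y_odd R (r - m)) ⊕ cst (y_even R (r - m)) ⊗ fps_inv (Kaux R r m).
Proof. by rewrite /Aser subSS. Qed.

Lemma step_alg (X X' Aa a b a' b' al be be' : S) :
  X = cst 1 ⊖ T ⊗ Aa -> X 0%N = 1 -> X' 0%N = 1 ->
  b ⊗ Aa ⊗ X' = b' ⊗ (a ⊗ X ⊕ b) ->
  be ⊗ (a ⊕ b) = be' ⊗ (al ⊕ be) -> be ⊗ a' = be' ⊗ al ->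
  be ⊗ (a ⊕ b ⊗ fps_inv X) ⊗ (cst 1 ⊖ T ⊗ (a' ⊕ b' ⊗ fps_inv X')) =
  be' ⊗ (al ⊗ (cst 1 ⊖ T ⊗ (a ⊕ b ⊗ fps_inv X)) ⊕ be).
Proof.
move=> hX x0 x0' IH d1 d2.
have hW := inv_mul _ x0; have hW' := inv_mul _ x0'.
apply: (cancel_r _ _ _ x0'); apply: (cancel_r _ _ _ x0); apply: subr0_eq.
set W := fps_inv X in hW *; set W' := fps_inv X' in hW' *.
transitivity (
  X' ⊗ ((be ⊗ (a ⊕ b) ⊖ be' ⊗ (al ⊕ be)) ⊗ X ⊖ T ⊗ (a ⊗ X ⊕ b) ⊗ (be ⊗ a' ⊖ be' ⊗ al))
  ⊕ T ⊗ be ⊗ (b ⊗ Aa ⊗ X' ⊖ b' ⊗ (a ⊗ X ⊕ b))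
  ⊕ (W ⊗ X ⊖ cst 1) ⊗ (be ⊗ b ⊗ ((cst 1 ⊖ T ⊗ a') ⊗ X' ⊖ T ⊗ b') ⊖ be ⊗ b ⊗ T ⊗ b' ⊗ (W' ⊗ X' ⊖ cst 1)
       ⊕ be' ⊗ X' ⊗ T ⊗ al ⊗ b)
  ⊖ (W' ⊗ X' ⊖ cst 1) ⊗ be ⊗ (a ⊗ X ⊕ b) ⊗ T ⊗ b').
  rewrite hX; ring.
rewrite hW hW' IH d1 d2; ring.
Qed.

Lemma base_alg (be be' al c c' : F) : be * c = be' * (al + be) -> be * c' = be' * al ->
  cst be ⊗ cst c ⊗ (cst 1 ⊖ T ⊗ cst c') = cst be' ⊗ (cst al ⊗ (cst 1 ⊖ T ⊗ cst c) ⊕ cst be).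
Proof.
move=> h1 h2; apply: subr0_eq.
transitivity (cst (be * c - be' * (al + be)) ⊖ T ⊗ cst c ⊗ cst (be * c' - be' * al)).
  rewrite !cst_sub !cst_mul !cst_add; ring.
rewrite h1 h2 !cst_sub; ring.
Qed.

Lemma invariant (R R' : nat -> int -> F) r
 (hC2 : forall j, (1 <= j <= r)%N -> y_even R j * y_odd R' j.+1 = y_even R' j * y_odd R j)
 (hC1 : forall j, (1 <= j)%N -> (j < r)%N ->
    y_even R j * (y_odd R j.+1 + y_even R j.+1) = y_even R' j * (y_odd R j + y_even R j))
 (hC1r : y_even R r * y_odd R r.+1 = y_even R' r * (y_odd R r + y_even R r)) :
 forall m, (m < r)%N ->
 cst (y_even R (r - m)) ⊗ Aser R r m ⊗ Kaux R' r m =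
 cst (y_even R' (r - m)) ⊗ (cst (y_odd R (r - m)) ⊗ Kaux R r m ⊕ cst (y_even R (r - m))).
Proof.
elim=> [|m IH] hm.
  rewrite subn0 !KauxE /=; apply: base_alg; first exact: hC1r.
  by apply: hC2; rewrite hm leqnn.
have hm' : (m < r)%N by apply: ltnW.
have hj := subnSK hm'.
set j := (r - m.+1)%N in hj *.
move: (IH hm'); rewrite -hj => IH'.
rewrite (KauxE R' r m.+1) (KauxE R r m.+1) !AserS -hj.
have hj1 : (1 <= j)%N by rewrite /j subn_gt0.
have hjr : (j < r)%N by rewrite /j ltn_subrL /= (leq_trans _ hm).
apply: (@step_alg _ _ _ _ _ _ _ _ _ _ (KauxE R r m) (Kaux0 R r m) (Kaux0 R' r m) IH').
  by rewrite -!cst_add -!cst_mul hC1.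
by rewrite -!cst_mul hC2 // hj1 ltnW.
Qed.

Lemma top_alg (F0 F0' G G' K2 K2' A2 c c' y1 y2 y1' y2' : S) :
  F0 = cst 1 ⊖ T ⊗ (y1 ⊗ fps_inv G) -> F0' = cst 1 ⊖ T ⊗ (y1' ⊗ fps_inv G') ->
  G = cst 1 ⊖ T ⊗ (y2 ⊗ fps_inv K2) -> G' = cst 1 ⊖ T ⊗ (y2' ⊗ fps_inv K2') ->
  K2 = cst 1 ⊖ T ⊗ A2 -> K2 0%N = 1 -> K2' 0%N = 1 ->
  y2 ⊗ A2 ⊗ K2' = y2' ⊗ (y1 ⊗ K2 ⊕ y2) ->
  y1 ⊕ y2 = y1' -> c ⊗ y1 = c' ->
  c ⊗ fps_inv F0 = c ⊕ T ⊗ (c' ⊗ fps_inv F0').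
Proof.
move=> hF0 hF0' hG hG' hK2 k20 k20' inv y12 cc.
have g0 : G 0%N = 1 by rewrite hG c0_sub1T.
have g0' : G' 0%N = 1 by rewrite hG' c0_sub1T.
have f0 : F0 0%N = 1 by rewrite hF0 c0_sub1T.
have f0' : F0' 0%N = 1 by rewrite hF0' c0_sub1T.
have eK := inv_mul _ k20; have eK' := inv_mul _ k20'; have eG := inv_mul _ g0.
have eG' := inv_mul _ g0'; have eF := inv_mul _ f0; have eF' := inv_mul _ f0'.
have E1 : y1' ⊗ K2 ⊗ K2' = (y1 ⊗ K2 ⊕ y2) ⊗ (K2' ⊖ T ⊗ y2').
  apply: subr0_eq.
  transitivity (T ⊗ (y2' ⊗ (y1 ⊗ K2 ⊕ y2) ⊖ y2 ⊗ A2 ⊗ K2') ⊖ K2' ⊗ K2 ⊗ (y1 ⊕ y2 ⊖ y1')).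
    rewrite hK2; ring.
  rewrite -inv y12; ring.
have E2 : y1' ⊗ fps_inv G' = y1 ⊕ y2 ⊗ fps_inv K2.
  apply: (cancel_r _ _ _ k20'); apply: (cancel_r _ _ _ k20); apply: (cancel_r _ _ _ g0'); apply: subr0_eq.
  transitivity ((y1' ⊗ K2 ⊗ K2' ⊖ (y1 ⊗ K2 ⊕ y2) ⊗ (K2' ⊖ T ⊗ y2'))
     ⊕ y1' ⊗ K2 ⊗ K2' ⊗ (fps_inv G' ⊗ G' ⊖ cst 1)
     ⊖ y2 ⊗ (fps_inv K2 ⊗ K2 ⊖ cst 1) ⊗ (K2' ⊖ T ⊗ y2' ⊖ T ⊗ y2' ⊗ (fps_inv K2' ⊗ K2' ⊖ cst 1))
     ⊕ (y1 ⊗ K2 ⊕ y2) ⊗ T ⊗ y2' ⊗ (fps_inv K2' ⊗ K2' ⊖ cst 1)).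
    rewrite hG'; ring.
  rewrite eG' eK eK' E1; ring.
have E3 : F0' = G ⊗ F0.
  apply: subr0_eq.
  transitivity (T ⊗ y1 ⊗ (fps_inv G ⊗ G ⊖ cst 1) ⊖ T ⊗ (y1' ⊗ fps_inv G' ⊖ (y1 ⊕ y2 ⊗ fps_inv K2))).
    rewrite hF0' hF0 hG; ring.
  rewrite eG E2; ring.
have E4 : fps_inv F0' ⊗ F0 = fps_inv G.
  apply: subr0_eq.
  transitivity (fps_inv G ⊗ fps_inv F0' ⊗ (G ⊗ F0 ⊖ F0') ⊕ fps_inv G ⊗ (fps_inv F0' ⊗ F0' ⊖ cst 1)
     ⊖ fps_inv F0' ⊗ F0 ⊗ (fps_inv G ⊗ G ⊖ cst 1)).
    ring.
  rewrite -E3 eF' eG; ring.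
apply: (cancel_r _ _ _ f0); apply: subr0_eq.
transitivity (c ⊗ (fps_inv F0 ⊗ F0 ⊖ cst 1) ⊖ T ⊗ c' ⊗ (fps_inv F0' ⊗ F0 ⊖ fps_inv G)
   ⊕ T ⊗ (c ⊗ y1 ⊖ c') ⊗ fps_inv G).
  rewrite hF0; ring.
rewrite eF E4 cc; ring.
Qed.

Lemma shift (R R' : nat -> int -> F) r : (0 < r)%N ->
 (forall j, (1 <= j <= r)%N -> y_even R j * y_odd R' j.+1 = y_even R' j * y_odd R j) ->
 (forall j, (1 <= j)%N -> (j < r)%N ->
    y_even R j * (y_odd R j.+1 + y_even R j.+1) = y_even R' j * (y_odd R j + y_even R j)) ->
 y_even R r * y_odd R r.+1 = y_even R' r * (y_odd R r + y_even R r) ->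
 y_odd R 1 + y_even R 1 = y_odd R' 1 ->
 R 1%N 0 * y_odd R 1 = R' 1%N 0 ->
 cfrac R r = cst (R 1%N 0) ⊕ fps_mulX (cfrac R' r).
Proof.
move=> hr hC2 hC1 hC1r htop hc.
have hr1 : (r.-1 < r)%N by rewrite prednK.
have hinv := @invariant R R' r hC2 hC1 hC1r r.-1 hr1.
have e1 : (r - r.-1 = 1)%N by rewrite -(prednK hr) subSn // subnn.
rewrite e1 in hinv.
rewrite /cfrac /fps_div !mulX_mul.
eapply top_alg.
- reflexivity.
- reflexivity.
- reflexivity.
- reflexivity.
- rewrite /K2; apply: KauxE.
- exact: Kaux0.
- exact: Kaux0.
- exact: hinv.
- by rewrite -cst_add htop.
- by rewrite -cst_mul hc.
Qed.

End FPSring.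

Lemma main_gen (F : fieldType) (r : nat) (hr0 : (0 < r)%N) :
  forall (n : nat) (R : nat -> int -> F),
  (forall n : int, R 0%N n = 1) ->
  (forall n : int, R r.+1 n = 1) ->
  (forall (al : nat) (n : int), (1 <= al <= r)%N -> R al n != 0) ->
  (forall (al : nat) (n : int), (1 <= al <= r)%N ->
      R al (n + 1) * R al (n - 1) = R al n ^+ 2 + R al.+1 n * R al.-1 n) ->
  R 1%N (Posz n) = cfrac R r n.
Proof.
elim=> [|n IH] R h0 hr hnz hQ;
set R' := fun al (k : int) => R al (k + 1);
(have h0' : forall k, R' 0%N k = 1 by move=> k; exact: h0);
(have hr' : forall k, R' r.+1 k = 1 by move=> k; exact: hr);
(have hnz' : forall al k, (1 <= al <= r)%N -> R' al k != 0 by move=> al k h; exact: hnz);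
(have hsh : forall al, R' al 0 = R al 1 by move=> al; rewrite /R' add0r);
(have hQs : forall al, (1 <= al <= r)%N ->
   R' al 1 * R al 0 = R al 1 ^+ 2 + R al.+1 1 * R al.-1 1
  by move=> al h; move: (hQ al 1 h); rewrite subrr);
(have hC2 : forall j, (1 <= j <= r)%N -> y_even R j * y_odd R' j.+1 = y_even R' j * y_odd R j
  by move=> j hj; eapply C2; eassumption);
(have hC1 : forall j, (1 <= j)%N -> (j < r)%N ->
    y_even R j * (y_odd R j.+1 + y_even R j.+1) = y_even R' j * (y_odd R j + y_even R j)
  by move=> j hj1 hj2; eapply C1; eassumption);
(have hC1r : y_even R r * y_odd R r.+1 = y_even R' r * (y_odd R r + y_even R r)
  by eapply C1r; eassumption);
(have htop : y_odd R 1 + y_even R 1 = y_odd R' 1 by eapply Ctop; eassumption);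
(have hc : R 1%N 0 * y_odd R 1 = R' 1%N 0 by eapply Cc; eassumption);
have key := @shift F R R' r hr0 hC2 hC1 hC1r htop hc;
rewrite key /fps_add /fps_mulX /=.
  by rewrite addr0.
have hQ' : forall (al : nat) (k : int), (1 <= al <= r)%N ->
      R' al (k + 1) * R' al (k - 1) = R' al k ^+ 2 + R' al.+1 k * R' al.-1 k.
  by move=> al k h; rewrite /R' subrK; move: (hQ al (k + 1) h); rewrite addrK.
rewrite add0r -(IH R' h0' hr' hnz' hQ') /R'.
by rewrite intS addrC.
Qed.

Theorem mainTheorem9 (F : fieldType) (r : nat) (R : nat -> int -> F) :
  (0 < r)%N ->
  (forall n : int, R 0%N n = 1) ->
  (forall n : int, R r.+1 n = 1) ->
  (forall (al : nat) (n : int), (1 <= al <= r)%N -> R al n != 0) ->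
  (forall (al : nat) (n : int), (1 <= al <= r)%N ->
      R al (n + 1) * R al (n - 1) = R al n ^+ 2 + R al.+1 n * R al.-1 n) ->
  forall n : nat, R 1%N (Posz n) = cfrac R r n.
Proof.
move=> hr0 h0 hr hnz hQ n; exact: (@main_gen F r hr0 n R h0 hr hnz hQ).
Qed.
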